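(* Let $\mathbb{T}$ be a time scale and $\alpha\in(0,1]$. Let $f:\mathbb{R}\to\mathbb{R}$ be continuously differentiable and let $g:\mathbb{T}\to\mathbb{R}$ be continuous on $\mathbb{T}^k$. If $g$ is nabla fractional differentiable of order $\alpha$ at a left-dense point $t\in\mathbb{T}^k$, then $\nabla^{(\alpha)}(f\circ g)(t)=f'(g(t))\cdot\nabla^{(\alpha)}g(t)$.
   Context: A time scale $\mathbb{T}$ is a nonempty closed subset of $\mathbb{R}$ with the relative topology. For $t\in\mathbb{T}$: $\rho(t)=\sup\{s\in\mathbb{T}:s<t\}$, $\sigma(t)=\inf\{s\in\mathbb{T}:s>t\}$; $t$ is left-dense if $\rho(t)=t$. If $\mathbb{T}$ has a minimum $m$ with $\sigma(m)>m$ then $\mathbb{T}^k=\mathbb{T}\setminus\{m\}$, else $\mathbb{T}^k=\mathbb{T}$. $U_\delta(t)=(t-\delta,t+\delta)\cap\mathbb{T}$, $U^-_\delta(t)=(t-\delta,t)\cap\mathbb{T}$. Let $Q=\{1/q: q \text{ an odd positive integer}\}$; for $\alpha\in Q$, $x^\alpha$ is the real $q$-th root. Definition: $h:\mathbb{T}\to\mathbb{R}$ is nabla fractional differentiable of order $\alpha$ at $t\in\mathbb{T}^k$ if there is $L\in\mathbb{R}$ such that for every $\varepsilon>0$ there is $\delta>0$ with $|[h(\rho(t))-h(s)]-L[\rho(t)-s]^\alpha|\le\varepsilon|\rho(t)-s|^\alpha$ for all $s\in U_\delta(t)$ if $\alpha\in Q$, resp. all $s\in U^-_\delta(t)$ if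 $\alpha\notin Q$; then $\nabla^{(\alpha)}h(t):=L$. *)

(* Defs.v *)
From Stdlib Require Import Reals Lra.
From Coquelicot Require Import Coquelicot.
Open Scope R_scope.

Definition is_time_scale (T : R -> Prop) : Prop :=
  (exists x, T x) /\
  (forall x, (forall eps, 0 < eps -> exists y, T y /\ Rabs (y - x) < eps) -> T x).

(* rho(t) = sup {s in T | s < t}, with the convention sup emptyset = t. *)
Definition rho (T : R -> Prop) (t : R) : R :=
  match Lub_Rbar (fun s => T s /\ s < t) with
  | Finite r => r
  | _ => t
  end.

(* sigma(t) = inf {s in T | s > t}, with the convention inf emptyset = t. *)
Definition sigma (T : R -> Prop) (t : R) : R :=
  match Glb_Rbar (fun s => T s /\ t < s) with
  | Finite r => r
  | _ => t
  end.

Definition left_dense (T : R -> Prop) (t : R) : Prop := rho T t = t.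

(* T^k : remove the minimum m of T if sigma(m) > m. *)
Definition Tk (T : R -> Prop) (t : R) : Prop :=
  T t /\ ~ ((forall s, T s -> t <= s) /\ t < sigma T t).

Definition inQ (alpha : R) : Prop :=
  exists q : nat, Nat.Odd q /\ alpha = / INR q.

(* x^alpha: for x > 0 the usual power; for x < 0 (only used when alpha in Q)
   the real odd root, i.e. -((-x)^alpha); 0^alpha = 0. *)
Definition fpow (alpha x : R) : R :=
  if Rlt_dec 0 x then Rpower x alpha
  else if Rlt_dec x 0 then - Rpower (- x) alpha
  else 0.

Definition nabla_frac_deriv (T : R -> Prop) (alpha : R) (h : R -> R) (t L : R) : Prop :=
  Tk T t /\
  forall eps, 0 < eps -> exists delta, 0 < delta /\
    forall s, T s -> t - delta < s -> s < t + delta -> (inQ alpha \/ s < t) ->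
      Rabs ((h (rho T t) - h s) - L * fpow alpha (rho T t - s))
        <= eps * fpow alpha (Rabs (rho T t - s)).

Definition nabla_frac_differentiable (T : R -> Prop) (alpha : R) (h : R -> R) (t : R) : Prop :=
  exists L, nabla_frac_deriv T alpha h t L.

Definition continuous_on_Tk (T : R -> Prop) (g : R -> R) : Prop :=
  forall t, Tk T t -> forall eps, 0 < eps -> exists delta, 0 < delta /\
    forall s, T s -> Rabs (s - t) < delta -> Rabs (g s - g t) < eps.

(* Main.v *)
Require Import Defs.
From Stdlib Require Import Reals Lra.
From Coquelicot Require Import Coquelicot.
Open Scope R_scope.

Lemma fpow_abs a x : Rabs (fpow a x) <= fpow a (Rabs x).
Proof.
  unfold fpow, Rpower.
  destruct (Rlt_dec 0 x) as [H|H].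
  - rewrite (Rabs_right x) by lra. destruct (Rlt_dec 0 x); [|lra].
    rewrite Rabs_right; [lra|]. left; apply exp_pos.
  - destruct (Rlt_dec x 0) as [H1|H1].
    + rewrite (Rabs_left x) by lra. destruct (Rlt_dec 0 (-x)); [|lra].
      rewrite Rabs_Ropp, Rabs_right; [lra|]. left; apply exp_pos.
    + assert (x = 0) by lra. subst. rewrite Rabs_R0. destruct (Rlt_dec 0 0); [lra|].
      destruct (Rlt_dec 0 0); [lra|]. destruct (Rlt_dec 0 0); [lra|]. lra.
Qed.

Lemma fpow_nonneg a x : 0 <= fpow a (Rabs x).
Proof.
  pose proof (fpow_abs a x). pose proof (Rabs_pos (fpow a x)). lra.
Qed.

Theorem mainTheorem7 (T : R -> Prop) (alpha : R) (f g : R -> R) (t L : R) :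
  is_time_scale T ->
  0 < alpha <= 1 ->
  (forall x, ex_derive f x) ->
  (forall x, continuous (Derive f) x) ->
  continuous_on_Tk T g ->
  Tk T t ->
  left_dense T t ->
  nabla_frac_deriv T alpha g t L ->
  nabla_frac_deriv T alpha (fun x => f (g x)) t (Derive f (g t) * L).
Proof.
  intros _ _ Hf _ Hgc HTk Hld [_ Hg].
  split; [exact HTk|].
  unfold left_dense in Hld. rewrite Hld in *.
  intros eps Heps.
  set (D := Derive f (g t)).
  set (K := Rabs L + 1).
  assert (HD : derivable_pt_lim f (g t) D).
  { apply is_derive_Reals. apply Derive_correct. apply Hf. }
  assert (HK : 0 < K) by (unfold K; pose proof (Rabs_pos L); lra).
  assert (HD1 : 0 < Rabs D + 1) by (pose proof (Rabs_pos D); lra).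
  set (e1 := Rmin 1 (eps / (2 * (Rabs D + 1)))).
  assert (He1 : 0 < e1).
  { unfold e1. apply Rmin_pos; [lra|]. apply Rdiv_lt_0_compat; lra. }
  assert (He1a : e1 <= 1) by apply Rmin_l.
  assert (He1b : e1 * (Rabs D + 1) <= eps / 2).
  { assert (e1 <= eps / (2 * (Rabs D + 1))) by apply Rmin_r.
    apply Rmult_le_compat_r with (r := Rabs D + 1) in H; [|lra].
    replace (eps / (2 * (Rabs D + 1)) * (Rabs D + 1)) with (eps/2) in H by (field; lra).
    exact H. }
  set (eta := eps / (2 * K)).
  assert (Heta : 0 < eta) by (apply Rdiv_lt_0_compat; lra).
  assert (HetaK : eta * K = eps / 2) by (unfold eta; field; lra).
  destruct (Hg e1 He1) as [d1 [Hd1 H1]].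
  destruct (HD eta Heta) as [df Hdf].
  destruct (Hgc t HTk df (cond_pos df)) as [d2 [Hd2 H2]].
  exists (Rmin d1 d2). split; [apply Rmin_pos; lra|].
  intros s Hs Hs1 Hs2 HQ.
  assert (Hm1 := Rmin_l d1 d2). assert (Hm2 := Rmin_r d1 d2).
  specialize (H1 s Hs ltac:(lra) ltac:(lra) HQ).
  assert (Hc : Rabs (g s - g t) < df).
  { apply H2; [exact Hs|]. apply Rabs_def1; lra. }
  set (P := fpow alpha (t - s)) in *.
  set (A := fpow alpha (Rabs (t - s))) in *.
  assert (HPA : Rabs P <= A) by apply fpow_abs.
  assert (HA : 0 <= A) by apply fpow_nonneg.
  set (y := g s - g t) in *.
  assert (Hfirst : Rabs ((f (g t) - f (g s)) - D * (g t - g s)) <= eta * Rabs y).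
  { destruct (Req_dec y 0) as [Hy|Hy].
    - assert (g s = g t) by (unfold y in Hy; lra). rewrite H.
      replace (f (g t) - f (g t) - D * (g t - g t)) with 0 by ring.
      rewrite Rabs_R0. pose proof (Rabs_pos y). nra.
    - specialize (Hdf y Hy Hc).
      replace (g t + y) with (g s) in Hdf by (unfold y; ring).
      replace ((f (g t) - f (g s)) - D * (g t - g s))
        with (- (((f (g s) - f (g t)) / y - D) * y)) by (unfold y in *; field; exact Hy).
      rewrite Rabs_Ropp, Rabs_mult.
      apply Rmult_le_compat_r; [apply Rabs_pos|lra]. }
  assert (Hy : Rabs y <= K * A).
  { replace y with (- ((g t - g s - L * P) + L * P)) by (unfold y; ring).
    rewrite Rabs_Ropp.
    eapply Rle_trans; [apply Rabs_triang|].
    rewrite Rabs_mult. unfold K.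
    assert (Rabs L * Rabs P <= Rabs L * A) by (apply Rmult_le_compat_l; [apply Rabs_pos|lra]).
    nra. }
  replace ((f (g t) - f (g s)) - D * L * P)
    with (((f (g t) - f (g s)) - D * (g t - g s)) + D * ((g t - g s) - L * P)) by ring.
  eapply Rle_trans; [apply Rabs_triang|].
  rewrite Rabs_mult.
  assert (Rabs D * Rabs (g t - g s - L * P) <= Rabs D * (e1 * A))
    by (apply Rmult_le_compat_l; [apply Rabs_pos|lra]).
  assert (eta * Rabs y <= eta * (K * A)) by (apply Rmult_le_compat_l; lra).
  assert (e1 * A * Rabs D <= e1 * A * (Rabs D + 1)) by (apply Rmult_le_compat_l; nra).
  assert (e1 * (Rabs D + 1) * A <= eps / 2 * A) by (apply Rmult_le_compat_r; lra).
  nra.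
Qed.
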